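(* Let $K$ be a field, $G=\mathbb Z$, $\widehat G=2\mathbb Z$. If $t\in\mathbb Z$ is even, every $2\mathbb Z$-periodic Leibniz algebra $L(f,t)$ is isomorphic to one of $L_{\bar 0 1}(\alpha,t)$ ($\alpha\in\{0,1\}$), $L_{\bar 0 2}(t)$, $L_{\bar 0 3}(t)$. If $t$ is odd, every $2\mathbb Z$-periodic Leibniz algebra $L(f,t)$ is isomorphic to one of $L_{\bar 1 1}(\alpha,t)$ ($\alpha\in\{0,1\}$), $L_{\bar 1 2}(t)$, $L_{\bar 1 3}(t)$.
   Context: For $t\in\mathbb Z$ and $f:\mathbb Z\times\mathbb Z\to K$, $L(f,t)$ is the $K$-algebra with basis $\{e_a:a\in\mathbb Z\}$ and multiplication $e_ae_b=f(a,b)e_{a+b+t}$; it is $2\mathbb Z$-periodic if $f(a,b)$ depends only on the parities of $a$ and $b$, and a Leibniz algebra if $x(yz)=(xy)z-(xz)y$ for all $x,y,z$. The following algebras are of the form $L(f,t)$ with $f$ given by: $L_{\bar 0 1}(\alpha,t)$: $f(a,b)=\alpha$ if $a$ odd and $b$ even, $0$ otherwise (i.e. $e_{2k-1}e_{2m}=\alpha e_{2(k+m)-1+t}$); $L_{\bar 0 2}(t)$ and $L_{\bar 1 2}(t)$: $f(a,b)=-1$ if $a$ even and $b$ odd, $f(a,b)=1$ if $a$ odd and $b$ even, $0$ otherwise; $L_{\bar 0 3}(t)$: $f(a,b)=1$ if $a,b$ both odd, $0$ otherwise; $L_{\bar 1 1}(\alpha,t)$: $f(a,b)=\alpha$ if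 $a$ even and $b$ odd, $0$ otherwise; $L_{\bar 1 3}(t)$: $f(a,b)=1$ if $a,b$ both even, $0$ otherwise. *)

(* Defs.v *)
From HB Require Import structures.
From mathcomp Require Import all_boot all_order all_algebra.
Set Implicit Arguments. Unset Strict Implicit. Unset Printing Implicit Defensive.
Import Order.TTheory GRing.Theory Num.Theory.
Local Open Scope ring_scope.

(* The underlying vector space of L(f,t): the K-vector space with basis
   {e_a : a in Z}.  An element is represented by a formal finite sum
   given as a list [:: (a1,k1); ...; (an,kn)] standing for
   k1 e_{a1} + ... + kn e_{an}.  Two representations denote the same
   element iff they have the same coefficients ([veq]). *)
Definition vec (K : fieldType) := seq (int * K).

Definition coef (K : fieldType) (x : vec K) (c : int) : K :=
  \sum_(p <- x | p.1 == c) p.2.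

Definition veq (K : fieldType) (x y : vec K) : Prop :=
  forall c : int, coef x c = coef y c.

Definition vadd (K : fieldType) (x y : vec K) : vec K := x ++ y.

Definition vscale (K : fieldType) (k : K) (x : vec K) : vec K :=
  [seq (p.1, k * p.2) | p <- x].

Definition basis (K : fieldType) (a : int) : vec K := [:: (a, 1)].

Definition vmul (K : fieldType) (f : int -> int -> K) (t : int)
    (x y : vec K) : vec K :=
  [seq (p.1 + q.1 + t, f p.1 q.1 * p.2 * q.2) | p <- x, q <- y].

Definition zodd (a : int) : bool := ~~ (2 %| a)%Z.
Definition zeven (a : int) : bool := (2 %| a)%Z.

Definition periodic2 (K : fieldType) (f : int -> int -> K) : Prop :=
  forall a b a' b' : int, zodd a = zodd a' -> zodd b = zodd b' ->
    f a b = f a' b'.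

Definition leibniz (K : fieldType) (f : int -> int -> K) (t : int) : Prop :=
  forall x y z : vec K,
    veq (vmul f t x (vmul f t y z))
        (vadd (vmul f t (vmul f t x y) z)
              (vscale (-1) (vmul f t (vmul f t x z) y))).

Definition alg_iso (K : fieldType) (f : int -> int -> K) (t : int)
    (g : int -> int -> K) (s : int) : Prop :=
  exists phi : vec K -> vec K,
    [/\ forall x y, veq x y -> veq (phi x) (phi y),
        forall x y, veq (phi (vadd x y)) (vadd (phi x) (phi y)),
        forall (k : K) x, veq (phi (vscale k x)) (vscale k (phi x)),
        forall x y, veq (phi (vmul f t x y)) (vmul g s (phi x) (phi y)) &
        (forall x y, veq (phi x) (phi y) -> veq x y) /\
        (forall y, exists x, veq (phi x) y)].

Definition f01 (K : fieldType) (alpha : K) (a b : int) : K :=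
  if zodd a && zeven b then alpha else 0.
Definition f02 (K : fieldType) (a b : int) : K :=
  if zeven a && zodd b then -1 else if zodd a && zeven b then 1 else 0.
Definition f03 (K : fieldType) (a b : int) : K :=
  if zodd a && zodd b then 1 else 0.
Definition f11 (K : fieldType) (alpha : K) (a b : int) : K :=
  if zeven a && zodd b then alpha else 0.
Definition f12 (K : fieldType) (a b : int) : K := f02 K a b.
Definition f13 (K : fieldType) (a b : int) : K :=
  if zeven a && zeven b then 1 else 0.

(* Main.v *)
Require Import Defs.
From HB Require Import structures.
From mathcomp Require Import all_boot all_order all_algebra.
From mathcomp Require zify.
From mathcomp Require Import ring.
From Stdlib Require Import Lia.
Import GRing.Theory.
Local Open Scope ring_scope.

Lemma zev (a b : int) : (2 %| a + b)%Z = ((2 %| a)%Z == (2 %| b)%Z).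
Proof. case: (boolP (2 %| a)%Z); case: (boolP (2 %| b)%Z); move=> H1 H2 /=; lia. Qed.
Lemma zt1 : (2 %| (1:int))%Z = false. Proof. by []. Qed.
Lemma zt0 : (2 %| (0:int))%Z = true. Proof. by []. Qed.

Section S.
Variable K : fieldType.
Implicit Types (f g : int -> int -> K) (x y : vec K).

Lemma coef_cons (i : int) (k : K) x c :
  coef ((i, k) :: x) c = (if i == c then k else 0) + coef x c.
Proof. by rewrite /coef big_cons /=; case: (i == c); rewrite ?add0r. Qed.

Lemma coef_nil c : coef ([::] : vec K) c = 0.
Proof. by rewrite /coef big_nil. Qed.

Lemma coef_scale (k : K) x c : coef (vscale k x) c = k * coef x c.
Proof.
elim: x => [|[i a] x IH]; first by rewrite /= coef_nil mulr0.
rewrite /= coef_cons -/(vscale k x) IH coef_cons mulrDr.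
by case: (i == c); rewrite ?mulr0.
Qed.

Lemma vmul_cons f t p x y : vmul f t (p :: x) y =
  [seq (p.1 + q.1 + t, f p.1 q.1 * p.2 * q.2) | q <- y] ++ vmul f t x y.
Proof. by []. Qed.

Lemma vmul_scale f g t (l : K) x y : (forall a b, f a b = l * g a b) ->
  vscale l (vmul f t x y) = vmul g t (vscale l x) (vscale l y).
Proof.
move=> H; elim: x => [|p x IH] //=.
rewrite !vmul_cons -IH /vscale map_cat; congr (_ ++ _).
rewrite -!map_comp; apply: eq_map => q /=; congr pair.
rewrite H; ring.
Qed.

Lemma iso_scale f g t (l : K) : l != 0 -> (forall a b, f a b = l * g a b) ->
  alg_iso f t g t.
Proof.
move=> l0 H; exists (vscale l); split.
- by move=> x y E c; rewrite !coef_scale E.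
- by move=> x y c; rewrite /vadd /vscale map_cat.
- by move=> k x c; rewrite !coef_scale mulrCA.
- by move=> x y c; rewrite (@vmul_scale f g t l x y H).
split.
- by move=> x y E c; have := E c; rewrite !coef_scale => /(mulfI l0).
- move=> y; exists (vscale l^-1 y) => c.
  by rewrite !coef_scale mulrA mulfV // mul1r.
Qed.

Lemma leib_basis f t p q r : leibniz f t ->
  f q r * f p (q + r + t) = f p q * f (p + q + t) r - f p r * f (p + r + t) q.
Proof.
move=> H; have := H (basis K p) (basis K q) (basis K r) (p + q + r + t + t).
rewrite /vmul /basis /vadd /vscale /= !coef_cons coef_nil.
have -> : p + (q + r + t) + t = p + q + r + t + t by ring.
have -> : p + q + t + r + t = p + q + r + t + t by ring.
have -> : p + r + t + q + t = p + q + r + t + t by ring.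
rewrite eqxx => E. rewrite !addr0 !mulr1 in E. rewrite mulrC E; ring.
Qed.

Lemma fP f : periodic2 f -> forall a b, f a b =
  if zeven a then (if zeven b then f 0 0 else f 0 1)
  else (if zeven b then f 1 0 else f 1 1).
Proof.
move=> H a b; rewrite /zeven.
case: (boolP (2 %| a)%Z) => Ha; case: (boolP (2 %| b)%Z) => Hb;
  apply: H; rewrite /zodd ?Ha ?Hb //.
Qed.

End S.

Lemma even_case (K : fieldType) (f : int -> int -> K) (t : int) :
  periodic2 f -> leibniz f t -> zeven t ->
     [\/ alg_iso f t (f01 0) t, alg_iso f t (f01 1) t,
         alg_iso f t (@f02 K) t | alg_iso f t (@f03 K) t].
Proof.
move=> Hp Hl Ht.
have [A [B [C [D HF]]]] : exists A B C D, forall a b, f a b =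
  if zeven a then (if zeven b then A else B)
  else (if zeven b then C else D) by exists (f 0 0), (f 0 1), (f 1 0), (f 1 1); exact: fP.
have e000 := @leib_basis K f t 0 0 0 Hl.
have e111 := @leib_basis K f t 1 1 1 Hl.
have e101 := @leib_basis K f t 1 0 1 Hl.
have e001 := @leib_basis K f t 0 0 1 Hl.
move: Ht; rewrite /zeven => Ht.
rewrite !HF /zeven !zev zt0 zt1 Ht /= in e000 e111 e101 e001.
have {e000} hA : A = 0 by move: e000; rewrite subrr => /eqP; rewrite mulf_eq0 orbb => /eqP.
subst A.
have {e111} hDC : D * C = 0 by rewrite e111 subrr.
have Hs : forall g l, l != 0 -> (forall a b, f a b = l * g a b) -> alg_iso f t g t.
  by move=> g l l0 H; apply: (@iso_scale K f g t l l0 H).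
case: (eqVneq D 0) => hD.
- subst D; have {e001} hB : B * (B + C) = 0.
    by rewrite mulrDr e001 mul0r add0r addrC subrr.
  case: (eqVneq B 0) => hB0.
  + subst B; case: (eqVneq C 0) => hC0.
    * subst C; apply: Or41; apply: (Hs _ 1); first exact: oner_neq0. move=> a b.
      by rewrite HF /f01 /zodd /zeven; case: (2 %| a)%Z; case: (2 %| b)%Z; rewrite /= ?mulr0.
    * apply: Or42; apply: (Hs _ C) => // a b.
      by rewrite HF /f01 /zodd /zeven; case: (2 %| a)%Z; case: (2 %| b)%Z; rewrite /= ?mulr0 ?mulr1.
  + have hC : C = - B.
      by move: hB => /eqP; rewrite mulf_eq0 (negPf hB0) /= addr_eq0 => /eqP ->; rewrite opprK.
    have hC0 : C != 0 by rewrite hC oppr_eq0.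
    apply: Or43; apply: (Hs _ C) => // a b.
    by rewrite HF /f02 /zodd /zeven; case: (2 %| a)%Z; case: (2 %| b)%Z; rewrite /= ?mulr0 ?mulr1 ?mulrN1 ?hC ?opprK.
- have hC : C = 0 by move: hDC => /eqP; rewrite mulf_eq0 (negPf hD) /= => /eqP.
  subst C; have hB : B = 0.
    by move: e101 => /eqP; rewrite !mul0r mulr0 subrr mulf_eq0 (negPf hD) orbF => /eqP.
  subst B; apply: Or44; apply: (Hs _ D) => // a b.
  by rewrite HF /f03 /zodd /zeven; case: (2 %| a)%Z; case: (2 %| b)%Z; rewrite /= ?mulr0 ?mulr1.
Qed.

Lemma odd_case (K : fieldType) (f : int -> int -> K) (t : int) :
  periodic2 f -> leibniz f t -> zodd t ->
     [\/ alg_iso f t (f11 0) t, alg_iso f t (f11 1) t,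
         alg_iso f t (@f12 K) t | alg_iso f t (@f13 K) t].
Proof.
move=> Hp Hl Ht.
have [A [B [C [D HF]]]] : exists A B C D, forall a b, f a b =
  if zeven a then (if zeven b then A else B)
  else (if zeven b then C else D) by exists (f 0 0), (f 0 1), (f 1 0), (f 1 1); exact: fP.
have e000 := @leib_basis K f t 1 1 1 Hl.
have e111 := @leib_basis K f t 0 0 0 Hl.
have e101 := @leib_basis K f t 0 1 0 Hl.
have e001 := @leib_basis K f t 1 1 0 Hl.
move: Ht; rewrite /zodd => Ht.
rewrite !HF /zeven !zev zt0 zt1 (negPf Ht) /= in e000 e111 e101 e001.
have {e000} hD : D = 0 by move: e000; rewrite subrr => /eqP; rewrite mulf_eq0 orbb => /eqP.
subst D.
have {e111} hAB : A * B = 0 by rewrite e111 subrr.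
have Hs : forall g l, l != 0 -> (forall a b, f a b = l * g a b) -> alg_iso f t g t.
  by move=> g l l0 H; apply: (@iso_scale K f g t l l0 H).
case: (eqVneq A 0) => hA.
- subst A; have {e001} hC : C * (C + B) = 0.
    by rewrite mulrDr e001 mul0r add0r addrC subrr.
  case: (eqVneq C 0) => hC0.
  + subst C; case: (eqVneq B 0) => hB0.
    * subst B; apply: Or41; apply: (Hs _ 1); first exact: oner_neq0. move=> a b.
      by rewrite HF /f11 /zodd /zeven; case: (2 %| a)%Z; case: (2 %| b)%Z; rewrite /= ?mulr0.
    * apply: Or42; apply: (Hs _ B) => // a b.
      by rewrite HF /f11 /zodd /zeven; case: (2 %| a)%Z; case: (2 %| b)%Z; rewrite /= ?mulr0 ?mulr1.
  + have hB : B = - C.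
      by move: hC => /eqP; rewrite mulf_eq0 (negPf hC0) /= addr_eq0 => /eqP ->; rewrite opprK.
    apply: Or43; apply: (Hs _ C) => // a b.
    by rewrite HF /f12 /f02 /zodd /zeven; case: (2 %| a)%Z; case: (2 %| b)%Z; rewrite /= ?mulr0 ?mulr1 ?mulrN1 ?hB ?opprK.
- have hB : B = 0 by move: hAB => /eqP; rewrite mulf_eq0 (negPf hA) /= => /eqP.
  subst B; have hC : C = 0.
    by move: e101 => /eqP; rewrite !mul0r mulr0 subrr mulf_eq0 (negPf hA) orbF => /eqP.
  subst C; apply: Or44; apply: (Hs _ A) => // a b.
  by rewrite HF /f13 /zodd /zeven; case: (2 %| a)%Z; case: (2 %| b)%Z; rewrite /= ?mulr0 ?mulr1.
Qed.

Theorem mainTheorem8 (K : fieldType) (f : int -> int -> K) (t : int) :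
  periodic2 f -> leibniz f t ->
  (zeven t ->
     [\/ alg_iso f t (f01 0) t, alg_iso f t (f01 1) t,
         alg_iso f t (@f02 K) t | alg_iso f t (@f03 K) t]) /\
  (zodd t ->
     [\/ alg_iso f t (f11 0) t, alg_iso f t (f11 1) t,
         alg_iso f t (@f12 K) t | alg_iso f t (@f13 K) t]).
Proof.
move=> Hp Hl; split; [exact: even_case | exact: odd_case].
Qed.
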